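(* Let $\mathcal{X}$ be a finite set and let $d$ be a metric on $\mathcal{X}$. Then there exists a channel $W:\mathcal{X}\to\mathcal{X}$ that is matched to $d$.
   Context: A channel $W:\mathcal{X}\to\mathcal{X}$ with input and output alphabet $\mathcal{X}$ is given by a conditional probability distribution $\Pr:\mathcal{X}\times\mathcal{X}\to\mathbb{R}$, where $\Pr(x\mid y)=\Pr(x\text{ received}\mid y\text{ sent})\ge 0$ and $\sum_{x\in\mathcal{X}}\Pr(x\mid y)=1$ for every $y\in\mathcal{X}$. All codewords are assumed equally likely. A channel $W$ and a metric $d$ on $\mathcal{X}$ are called matched if for every (nonempty) code $C\subseteq\mathcal{X}$ and every $x\in\mathcal{X}$, $$\operatorname{argmax}_{y\in C}\Pr(x\text{ received}\mid y\text{ sent})=\operatorname{argmin}_{y\in C} d(x,y)$$ (equality of sets), i.e. maximum likelihood decoding on $W$ coincides with nearest neighbor decoding with respect to $d$ for every code. *)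

(* Defs.v *)
From HB Require Import structures.
From mathcomp Require Import all_boot all_order all_algebra.
From mathcomp Require Import reals.
Set Implicit Arguments. Unset Strict Implicit. Unset Printing Implicit Defensive.
Import Order.TTheory GRing.Theory Num.Theory.
Local Open Scope ring_scope.

Definition is_metric (R : realType) (X : finType) (d : X -> X -> R) : Prop :=
  [/\ forall x y, 0 <= d x y,
      forall x y, d x y = 0 <-> x = y,
      forall x y, d x y = d y x &
      forall x y z, d x z <= d x y + d y z].

(* A channel W : X -> X, given by W x y = Pr(x received | y sent). *)
Definition is_channel (R : realType) (X : finType) (W : X -> X -> R) : Prop :=
  (forall x y, 0 <= W x y) /\ (forall y, \sum_(x : X) W x y = 1).

Definition argmax_set (R : realType) (X : finType) (C : {set X}) (f : X -> R)
  : {set X} := [set y in C | [forall z in C, f z <= f y]].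
Definition argmin_set (R : realType) (X : finType) (C : {set X}) (f : X -> R)
  : {set X} := [set y in C | [forall z in C, f y <= f z]].

(* W and d are matched: ML decoding = NN decoding for every nonempty code. *)
Definition matched (R : realType) (X : finType) (W d : X -> X -> R) : Prop :=
  forall (C : {set X}) (x : X), C != set0 ->
    argmax_set C (fun y => W x y) = argmin_set C (fun y => d x y).

(* Main.v *)
Require Import Defs.
From mathcomp Require Import all_boot all_order all_algebra.
From mathcomp Require Import reals.
From mathcomp Require Import ring lra.
Import Order.TTheory GRing.Theory Num.Theory.
Local Open Scope ring_scope.

Theorem mainTheorem1 (R : realType) (X : finType) (d : X -> X -> R) :
  is_metric d -> exists W : X -> X -> R, is_channel W /\ matched W d.
Proof.
case=> d0 dE dS _.
pose D : R := 1 + \sum_a \sum_b d a b.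
have dD : forall x y, d x y + 1 <= D.
  move=> x y; rewrite /D addrC lerD2l.
  rewrite (bigD1 x) //= (bigD1 y) //= -addrA lerDl.
  apply: addr_ge0; apply: sumr_ge0 => *; [|apply: sumr_ge0 => *]; exact: d0.
pose S y : R := \sum_a (D - d a y).
have S0 : forall y, 0 <= S y.
  move=> y; apply: sumr_ge0 => a _; have := dD a y; lra.
pose T := \sum_b S b.
have ST : forall y, S y <= T.
  move=> y; rewrite /T (bigD1 y) //= lerDl; exact: sumr_ge0.
pose del : R := (1 + T)^-1.
have T0 : 0 <= T by apply: sumr_ge0.
have del0 : 0 < del by rewrite invr_gt0; lra.
have e0 : forall y, 0 < 1 - del * S y.
  move=> y; have h1 : del * (1 + T) = 1 by rewrite mulVf //; apply/eqP; lra.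
  have h2 : del * S y <= del * T by rewrite ler_pM2l.
  have : del * (1 + T) = del + del * T by ring.
  lra.
pose W x y : R := del * (D - d x y) + (x == y)%:R * (1 - del * S y).
have key : forall x y z, (W x z <= W x y) = (d x y <= d x z).
  move=> x y z; rewrite /W.
  have hpos : forall a b, a != b -> 0 < d a b.
    move=> a b ab; rewrite lt_def d0 andbT; apply/eqP => /dE/eqP; exact/negP.
  have dxx : d x x = 0 by apply/dE.
  case: (eqVneq x y) => [<-|xy]; case: (eqVneq x z) => [<-|xz].
  - by rewrite !lexx.
  - rewrite dxx (d0 x z) mul0r mul1r addr0 subr0.
    have := e0 x; have := d0 x z; have := dD x z; move=> h1 h2 h3.
    have : del * d x z >= 0 by apply: mulr_ge0; lra.
    move=> h4; apply/idP; rewrite mulrBr; lra.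
  - rewrite dxx mul0r mul1r addr0 subr0.
    have h2 := hpos _ _ xy; have h1 := e0 x.
    have h3 := mulr_gt0 del0 h2.
    have -> : (d x y <= 0) = false by apply/negbTE; rewrite -ltNge.
    apply/negbTE; rewrite -ltNge mulrBr; lra.
  - rewrite !mul0r !addr0 ler_pM2l // lerD2l lerN2 //.
exists W; split; [split|].
- move=> x y; rewrite /W; apply: addr_ge0.
    apply: mulr_ge0; [exact: ltW|]; have := dD x y; lra.
  apply: mulr_ge0; [exact: ler0n| exact: ltW].
- move=> y; rewrite /W big_split /= -mulr_sumr -/(S y).
  rewrite (bigD1 y) //= eqxx mul1r big1 ?addr0; first ring.
  by move=> x /negbTE ->; rewrite mul0r.
- move=> C x _; apply/setP => y; rewrite !inE; case: (y \in C) => //=.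
  by apply: eq_forallb => z; rewrite key.
Qed.
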